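(* Let $G$ be a finite group with identity $e$ and let $H$ be a normal subgroup of $G$. Then the subgroup sum graph $\Gamma_{G,H}$ admits a perfect code if and only if at least one of the following holds: (i) $H=\{e\}$; (ii) $|H|=2$; (iii) for every $x\in G\setminus H$ with $x^2\in H$, the coset $Hx$ contains an involution.
   Context: For a normal subgroup $H$ of a finite group $G$ with identity $e$, the subgroup sum graph $\Gamma_{G,H}$ is the simple undirected graph with vertex set $G$ in which distinct vertices $x,y$ are adjacent if and only if $xy\in H\setminus\{e\}$ (this is symmetric because $H$ is normal). A perfect code in a graph is a set $C$ of vertices that is independent and such that every vertex not in $C$ is adjacent to exactly one vertex of $C$. An involution is an element of order exactly $2$. *)

(* Defs.v *)
From mathcomp Require Import all_boot all_fingroup.
Set Implicit Arguments. Unset Strict Implicit. Unset Printing Implicit Defensive.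
Local Open Scope group_scope.

Definition ssg_adj (gT : finGroupType) (H : {set gT}) (x y : gT) : bool :=
  (x != y) && (x * y \in H :\ 1).

Definition is_perfect_code (gT : finGroupType) (G H C : {set gT}) : Prop :=
  [/\ C \subset G,
      {in C &, forall x y, ~~ ssg_adj H x y} &
      {in G :\: C, forall x, #|[set c in C | ssg_adj H x c]| = 1%N}].

Definition has_perfect_code (gT : finGroupType) (G H : {set gT}) : Prop :=
  exists C : {set gT}, is_perfect_code G H C.

Definition involution (gT : finGroupType) (y : gT) : bool := #[y] == 2%N.

(* Main.v *)
Require Import Defs.
From mathcomp Require Import all_boot all_fingroup all_solvable.
Local Open Scope group_scope.
Set Implicit Arguments. Unset Strict Implicit.

Section S.
Variables (gT : finGroupType) (G H : {group gT}).
Hypothesis nHG : H <| G.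

Lemma sHG : H \subset G. Proof. exact: normal_sub. Qed.

Lemma memHswap x y : x \in G -> (x * y \in H) = (y * x \in H).
Proof.
move=> xG; rewrite -(memJ_norm (x*y) (subsetP (normal_norm nHG) x xG)).
by rewrite conjgE !mulgA mulVg mul1g.
Qed.

Lemma co_eq x y : (H :* x == H :* y) = (x * y^-1 \in H).
Proof. by rewrite -mem_rcoset; apply/eqP/rcoset_eqP. Qed.

Lemma coG x y : x \in G -> y \in H :* x -> y \in G.
Proof.
move=> xG; rewrite mem_rcoset => /(subsetP sHG) h.
by rewrite -(mulgKV x y) groupM.
Qed.

Lemma inv_co x y : x \in G -> y \in H :* x -> y^-1 \in H :* x^-1.
Proof.
move=> xG yx; have yG := coG xG yx; move: yx.
rewrite !mem_rcoset invgK => h.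
rewrite memHswap ?groupV //.
by rewrite -[x in x * _]invgK -invMg groupV.
Qed.

Lemma co_same x y : x \in G -> y \in H :* x ->
  H :* y = H :* x /\ H :* y^-1 = H :* x^-1.
Proof.
move=> xG yx; split; apply/rcoset_eqP => //; exact: inv_co.
Qed.

Lemma sq_co x : (x ^+ 2 \in H) = (H :* x == H :* x^-1).
Proof. by rewrite co_eq invgK expgS expg1. Qed.

Lemma adj_co x y : x \in G -> (x * y \in H) = (y \in H :* x^-1).
Proof. by move=> xG; rewrite mem_rcoset invgK memHswap. Qed.

Lemma prodK x d c : x \in G -> d \in H :* x -> c \in H :* x^-1 -> d * c \in H.
Proof.
move=> xG; rewrite !mem_rcoset invgK => hd hc.
rewrite -(mulgKV x d) -mulgA groupM //; by rewrite memHswap.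
Qed.

Definition pk (A : {set gT}) : gT := odflt (repr A) [pick c in A | c ^+ 2 == 1].
Definition Qs (A B : {set gT}) : gT :=
  if A == B then pk A else if (enum_rank A < enum_rank B)%N then repr A else (repr B)^-1.
Definition Q x := Qs (H :* x) (H :* x^-1).
Definition C := [set x in G | (x == Q x) || (x^-1 == Q x)].

Lemma Q_co x y : x \in G -> y \in H :* x -> Q y = Q x.
Proof. by move=> xG yx; case: (co_same xG yx) => e1 e2; rewrite /Q e1 e2. Qed.

Lemma pk_mem A : A != set0 -> pk A \in A.
Proof.
case/set0Pn=> a aA; rewrite /pk; case: pickP => [c /andP[]|] //= _.
exact: mem_repr aA.
Qed.

Lemma Q_mem x : x \in G -> Q x \in H :* x.
Proof.
move=> xG; rewrite /Q /Qs.
case: ifP => _; first by apply: pk_mem; apply/set0Pn; exists x; exact: rcoset_refl.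
case: ifP => _; first exact: mem_repr _ (rcoset_refl _ _).
have := inv_co (groupVr xG) (mem_repr _ (rcoset_refl H x^-1)).
by rewrite invgK.
Qed.

Lemma Q_inv x : x^+2 \notin H -> Q x^-1 = (Q x)^-1.
Proof.
rewrite sq_co /Q /Qs invgK => AB; rewrite eq_sym (negbTE AB).
case: ltngtP => h; rewrite ?invgK //.
by case/eqP: AB; apply: enum_rank_inj; apply: val_inj.
Qed.

Lemma Q_sq x : x^+2 \in H -> (exists2 y, y \in H :* x & y ^+ 2 == 1) -> (Q x)^+2 = 1.
Proof.
rewrite sq_co /Q /Qs => /eqP ->; rewrite eqxx /pk => -[y yx y2].
case: pickP => [c /andP[_ /eqP]|/(_ y)] //=.
by rewrite yx y2.
Qed.


Lemma C_nsq z : z \in C -> z^+2 \notin H -> z = Q z.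
Proof.
rewrite inE => /andP[zG /orP[/eqP//|/eqP e]] nsq; exfalso.
have := Q_mem zG; rewrite -e => /rcoset_eqP h.
by move: nsq; rewrite sq_co h eqxx.
Qed.

Lemma indep : {in C &, forall x y, ~~ ssg_adj H x y}.
Proof.
move=> x y xC yC; apply/negP; rewrite /ssg_adj in_setD1 => /and3P[nxy nx1 xyH].
have xG : x \in G by move: xC; rewrite inE => /andP[].
have yG : y \in G by move: yC; rewrite inE => /andP[].
have yx : y \in H :* x^-1 by rewrite -adj_co.
have Qy : Q y = Q x^-1 := Q_co (groupVr xG) yx.
case: (boolP (x^+2 \in H)) => sx.
  have ex : H :* x^-1 = H :* x by apply/eqP; rewrite eq_sym -sq_co.
  rewrite ex in yx; have Qyx := Q_co xG yx.
  move: xC yC; rewrite !inE xG yG Qyx /= => /orP[]/eqP e1 /orP[]/eqP e2.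
  - by rewrite e1 e2 eqxx in nxy.
  - by move: nx1; rewrite -(invgK y) e2 -e1 mulgV eqxx.
  - by move: nx1; rewrite e2 -e1 mulgV eqxx.
  - by move: nxy; rewrite -(invgK x) -(invgK y) e1 e2 eqxx.
have ex := C_nsq xC sx.
have sy : y^+2 \notin H.
  have [e1 e2] := co_same (groupVr xG) yx; rewrite invgK in e2.
  by rewrite sq_co e1 e2 eq_sym -sq_co.
have ey := C_nsq yC sy.
by move: nx1; rewrite ey Qy Q_inv // -ex mulgV eqxx.
Qed.

Lemma c0sq (hyp : [\/ H :=: 1, #|H| = 2%N | forall x, x \in G :\: H -> x ^+ 2 \in H ->
        exists2 y, y \in H :* x & involution y]) x :
  x \in G -> x^+2 \in H -> x != Q x -> x^-1 != Q x -> (Q x)^+2 = 1.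
Proof.
move=> xG sx xnQ xinQ.
have ex : H :* x^-1 = H :* x by apply/eqP; rewrite eq_sym -sq_co.
have cx := Q_mem xG.
case: hyp => [H1|H2|H3].
- have : Q x * x^-1 \in (1 : {set gT}) by rewrite -H1 -mem_rcoset.
  by rewrite inE -eq_mulgV1 eq_sym (negbTE xnQ).
- have cix : (Q x)^-1 \in H :* x by rewrite -ex; apply: inv_co.
  have e1 := cardsD1 x (H :* x); rewrite card_rcoset H2 rcoset_refl in e1.
  have /cards1P [a ha] : #|H :* x :\ x| == 1%N by move: e1; rewrite add1n => -[<-].
  have : Q x \in H :* x :\ x by rewrite in_setD1 eq_sym xnQ.
  have : (Q x)^-1 \in H :* x :\ x.
    rewrite in_setD1 cix andbT; apply: contra xinQ => /eqP e; by rewrite -{1}e invgK.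
  rewrite ha !inE => /eqP e /eqP e'.
  by rewrite expgS expg1 {1}e' -e mulVg.
- apply: Q_sq => //.
  case: (boolP (x \in H)) => xH.
    by exists 1; rewrite ?expg1n // mem_rcoset mul1g groupV.
  have xGH : x \in G :\: H by rewrite inE xG xH.
  have [y yx /eqP iy] := H3 x xGH sx.
  by exists y => //; rewrite -iy expg_order.
Qed.


Lemma one_nb (hyp : [\/ H :=: 1, #|H| = 2%N | forall x, x \in G :\: H -> x ^+ 2 \in H ->
        exists2 y, y \in H :* x & involution y]) x :
  x \in G :\: C -> #|[set c in C | ssg_adj H x c]| = 1%N.
Proof.
case/setDP => xG xnC.
have xnQ : x != Q x by apply: contra xnC => e; rewrite inE xG e.
have xinQ : x^-1 != Q x by apply: contra xnC => e; rewrite inE xG e orbT.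
suff [w ->] : exists w, [set c in C | ssg_adj H x c] = [set w] by rewrite cards1.
case: (boolP (x^+2 \in H)) => sx.
  have ex : H :* x^-1 = H :* x by apply/eqP; rewrite eq_sym -sq_co.
  have c2 := c0sq hyp xG sx xnQ xinQ.
  have cinv : (Q x)^-1 = Q x.
    by apply/eqP; rewrite eq_invg_mul -c2 expgS expg1.
  exists (Q x); apply/setP => c; rewrite !inE /ssg_adj in_setD1.
  apply/idP/idP.
    case/andP => /andP[cG hc] /and3P[_ _ xcH].
    have cx : c \in H :* x by rewrite -ex -adj_co.
    move: hc; rewrite (Q_co xG cx) => /orP[//|/eqP e].
    by rewrite -cinv -e invgK.
  move/eqP => ->.
  have QG := coG xG (Q_mem xG).
  rewrite QG (Q_co xG (Q_mem xG)) eqxx /=.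
  rewrite xnQ /=.
  rewrite adj_co // ex Q_mem // andbT.
  apply: contra xinQ => /eqP h.
  by rewrite -(mulKg x (Q x)) h mulg1.
have Qinv := Q_inv sx.
exists (Q x^-1); apply/setP => c; rewrite !inE /ssg_adj in_setD1.
apply/idP/idP.
  case/andP => /andP[cG hc] /and3P[_ _ xcH].
  have cx : c \in H :* x^-1 by rewrite -adj_co.
  have [e1 e2] := co_same (groupVr xG) cx; rewrite invgK in e2.
  have Qc := Q_co (groupVr xG) cx.
  have nsq : c^+2 \notin H by rewrite sq_co e1 e2 eq_sym -sq_co.
  have cC : c \in C by rewrite inE cG hc.
  by rewrite {1}(C_nsq cC nsq) Qc.
move/eqP => ->.
have wx := Q_mem (groupVr xG).
have wG := coG (groupVr xG) wx.
rewrite wG (Q_co (groupVr xG) wx) eqxx /=.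
rewrite adj_co // wx andbT; apply/andP; split.
  apply: contra xnC => /eqP e.
  have e' : x^-1 = Q x by rewrite {1}e Qinv invgK.
  by rewrite inE xG e' eqxx orbT.
apply: contra xnC => /eqP h.
have e : Q x^-1 = x^-1 by rewrite -(mulKg x (Q x^-1)) h mulg1.
rewrite Qinv in e.
by rewrite inE xG (invg_inj e) eqxx.
Qed.

End S.

Theorem theorem3p1 (gT : finGroupType) (G H : {group gT}) :
  H <| G ->
  has_perfect_code G H <->
  [\/ H :=: 1,
      #|H| = 2%N
    | forall x, x \in G :\: H -> x ^+ 2 \in H ->
        exists2 y, y \in H :* x & involution y].
Proof.
move=> nHG; split; last first.
  move=> hyp; exists (C G H); split.
  - by apply/subsetP => x; rewrite inE => /andP[].
  - exact: indep nHG.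
  - exact: one_nb nHG hyp.
case=> D [sD ind one].
have [H1|nH1] := eqVneq (H : {set gT}) 1; first by apply: Or31.
have [H2|nH2] := eqVneq #|H| 2; first by apply: Or32.
apply: Or33 => x /setDP[xG xnH] x2.
have nH1' : #|H| != 1%N.
  apply/negP => /cards1P [a Ha].
  have : (1 : gT) \in H := group1 H.
  rewrite Ha inE => /eqP a1.
  by move: nH1; rewrite Ha -a1 eqxx.
have H3 : (2 < #|H|)%N.
  by move: (cardG_gt0 H) nH1' nH2; case: #|H| => [|[|[|n]]].
have ex : H :* x = H :* x^-1 by apply/eqP; rewrite -sq_co.
have [c cD cx] : exists2 c, c \in D & c \in H :* x.
  case: (boolP (x \in D)) => xD; first by exists x; rewrite ?rcoset_refl.
  have := one x; rewrite inE xD xG => /(_ isT) /eqP /cards1P [c hc].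
  have : c \in [set c0 in D | ssg_adj H x c0] by rewrite hc set11.
  rewrite inE /ssg_adj in_setD1 => /and4P[cD _ _ xcH].
  by exists c => //; rewrite ex -(adj_co nHG).
have cG := coG nHG xG cx.
case: (boolP (c^+2 == 1)) => c2.
  exists c => //.
  have c1 : c != 1.
    apply: contraNneq xnH => e.
    by move: cx; rewrite e mem_rcoset mul1g groupV.
  have d : (#[c] %| 2)%N by rewrite order_dvdn.
  have n1 : #[c] != 1%N by rewrite order_eq1.
  rewrite /involution.
  move: (order_gt0 c) (dvdn_leq (isT : (0 < 2)%N) d) n1.
  by case: #[c] => [|[|[|n]]].
exfalso.
have ci : c^-1 \in H :* x by rewrite ex; apply: (inv_co nHG).
have cneq : c != c^-1.
  apply: contra c2 => /eqP e; by rewrite expgS expg1 {1}e mulVg.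
have : (0 < #|(H :* x) :\ c :\ c^-1|)%N.
  have e1 := cardsD1 c (H :* x); have e2 := cardsD1 c^-1 ((H :* x) :\ c).
  rewrite card_rcoset cx in e1; rewrite e2 in e1.
  move: e1 H3; case: (_ \in _); case: #|(H :* x) :\ c :\ c^-1| => [|n] -> //.
move/card_gt0P => [d]; rewrite !in_setD1 => /and3P[dci dc dx].
have dG := coG nHG xG dx.
have adjdc : ssg_adj H d c.
  rewrite /ssg_adj in_setD1 dc /=; apply/andP; split.
    apply: contra dci => /eqP e; by rewrite -(mulgK c d) e mul1g.
  by apply: (prodK nHG xG dx); rewrite -ex.
have dnD : d \notin D.
  by apply/negP => dD; have := ind d c dD cD; rewrite adjdc.
have := one d; rewrite inE dnD dG => /(_ isT) /eqP /cards1P [a ha].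
have ca : c = a.
  have : c \in [set c0 in D | ssg_adj H d c0] by rewrite inE cD adjdc.
  by rewrite ha inE => /eqP.
case: (boolP (c^-1 \in D)) => ciD.
  have : c^-1 \in [set c0 in D | ssg_adj H d c0].
    rewrite inE ciD /ssg_adj in_setD1 dci /=; apply/andP; split.
      apply: contra dc => /eqP e; by rewrite -(mulgKV c d) e mul1g.
    by apply: (prodK nHG xG dx); rewrite -ex.
  rewrite ha inE -ca => /eqP e.
  by rewrite e eqxx in cneq.
have := one c^-1; rewrite inE ciD groupV cG => /(_ isT)/eqP/cards1P[e he].
have : e \in [set c0 in D | ssg_adj H c^-1 c0] by rewrite he set11.
rewrite inE /ssg_adj in_setD1 => /and4P[eD nce nce1 ceH].
have := ind c e cD eD; rewrite /ssg_adj in_setD1.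
move/negP; apply; apply/and3P; split.
- by apply: contra nce1 => /eqP <-; rewrite mulVg.
- apply: contra nce => /eqP h; by rewrite -(mulKg c e) h mulg1.
- apply: (prodK nHG xG cx); rewrite -ex.
  have ec : e \in H :* c by rewrite mem_rcoset -(memHswap nHG) ?groupV.
  by move: ec; rewrite (rcoset_eqP cx).
Qed.
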